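(* Let $L\ge2$, let $\ell$ be continuously differentiable, and let $W(t)$, $t\ge0$, be a gradient flow trajectory. Then for all $t\ge0$: (i) for every $1\le k\le L$, $\|W_k(t)\|_F^2-\|W_k(t)\|_2^2\le D$; (ii) for every $1\le k<L$ with $W_{k+1}(t)\ne0$, $$\langle v_{k+1}(t),u_k(t)\rangle^2\ \ge\ 1-\frac{D+\|W_{k+1}(0)\|_2^2+\|W_k(0)\|_2^2}{\|W_{k+1}(t)\|_2^2};$$ (iii) if $\max_{1\le k\le L}\|W_k(t)\|_F\to\infty$ as $t\to\infty$, then $\left|\left\langle \frac{w_{\mathrm{prod}}(t)}{\prod_{k=1}^L\|W_k(t)\|_F},v_1(t)\right\rangle\right|\to1$.
   Context: A depth-$L$ linear network is $W=(W_L,\dots,W_1)$ with $W_k\in\mathbb{R}^{d_k\times d_{k-1}}$, $d_0=d$, $d_L=1$, and $w_{\mathrm{prod}}:=(W_L\cdots W_1)^\top\in\mathbb{R}^d$. Given vectors $z_1,\dots,z_n\in\mathbb{R}^d$ (with $z_i=y_ix_i$, $\|x_i\|\le1$, $y_i\in\{\pm1\}$), the risk is $\mathcal{R}(W)=\frac1n\sum_{i=1}^n\ell(\langle w_{\mathrm{prod}},z_i\rangle)$. Gradient flow: a $C^1$ curve $W(t)$, $t\in[0,\infty)$, with $\frac{d}{dt}W(t)=-\nabla\mathcal{R}(W(t))$. $\|\cdot\|_F$ is the Frobenius norm and $\|\cdot\|_2$ the spectral norm. The constant $D$ depends only on the initialization: $$D:=\Big(\max_{1\le k\le L}\|W_k(0)\|_F^2\Big)-\|W_L(0)\|_F^2+\sum_{k=1}^{L-1}\big\|W_k(0)W_k(0)^\top-W_{k+1}(0)^\top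 W_{k+1}(0)\big\|_2.$$ For each $k$ and time $t$, $u_k(t),v_k(t)$ are a pair of first (top) left and right unit singular vectors of $W_k(t)$. *)

(* Defs.v *)
From Stdlib Require Import Reals Lra Lia Arith ClassicalEpsilon.
Open Scope R_scope.

(* Matrices are functions row -> col -> R, with dimensions carried separately;
   only entries with in-range indices are ever used. Vectors: nat -> R. *)

Fixpoint sumR (n : nat) (f : nat -> R) : R :=
  match n with O => 0 | S m => sumR m f + f m end.

Fixpoint prodR1 (L : nat) (f : nat -> R) : R :=
  match L with O => 1 | S m => prodR1 m f * f (S m) end.

(* max_{k = 1}^{L} f k (with base 0; used only for nonnegative f) *)
Fixpoint maxR1 (L : nat) (f : nat -> R) : R :=
  match L with O => 0 | S m => Rmax (maxR1 m f) (f (S m)) end.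

Definition dot (n : nat) (x y : nat -> R) : R := sumR n (fun i => x i * y i).
Definition vnorm (n : nat) (x : nat -> R) : R := sqrt (dot n x x).

Definition matvec (m n : nat) (A : nat -> nat -> R) (x : nat -> R) : nat -> R :=
  fun i => sumR n (fun j => A i j * x j).
Definition trmx (A : nat -> nat -> R) : nat -> nat -> R := fun i j => A j i.
Definition matmul (p : nat) (A B : nat -> nat -> R) : nat -> nat -> R :=
  fun i j => sumR p (fun q => A i q * B q j).
Definition matsub (A B : nat -> nat -> R) : nat -> nat -> R :=
  fun i j => A i j - B i j.

Definition frob2 (m n : nat) (A : nat -> nat -> R) : R :=
  sumR m (fun i => sumR n (fun j => (A i j) ^ 2)).
Definition frob (m n : nat) (A : nat -> nat -> R) : R := sqrt (frob2 m n A).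

Definition spec_set (m n : nat) (A : nat -> nat -> R) (r : R) : Prop :=
  exists x : nat -> R, vnorm n x <= 1 /\ r = vnorm m (matvec m n A x).
Definition spec (m n : nat) (A : nat -> nat -> R) : R :=
  epsilon (inhabits 0) (fun s => is_lub (spec_set m n A) s).

Definition top_sing_pair (m n : nat) (A : nat -> nat -> R) (u v : nat -> R) : Prop :=
  vnorm m u = 1 /\ vnorm n v = 1 /\
  (forall i, (i < m)%nat -> matvec m n A v i = spec m n A * u i) /\
  (forall j, (j < n)%nat -> matvec n m (trmx A) u j = spec m n A * v j).

(* A network: layer k (1 <= k <= L) is W k, a (dims k) x (dims (k-1)) matrix;
   dims 0 = d, dims L = 1. *)
Definition net := nat -> nat -> nat -> R.

Fixpoint prodmat (dims : nat -> nat) (W : net) (k : nat) : nat -> nat -> R :=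
  match k with
  | O => fun i j => if Nat.eqb i j then 1 else 0
  | S k' => matmul (dims k') (W (S k')) (prodmat dims W k')
  end.

(* w_prod = (W_L ... W_1)^T in R^d (dims L = 1) *)
Definition wprod (dims : nat -> nat) (L : nat) (W : net) : nat -> R :=
  fun j => prodmat dims W L 0%nat j.

Definition risk (dims : nat -> nat) (L n : nat) (ell : R -> R)
    (z : nat -> nat -> R) (W : net) : R :=
  / INR n * sumR n (fun i => ell (dot (dims O) (wprod dims L W) (z i))).

Definition upd (W : net) (k i j : nat) (x : R) : net :=
  fun k' i' j' =>
    if (Nat.eqb k' k && Nat.eqb i' i && Nat.eqb j' j)%bool then x else W k' i' j'.

Definition is_gradient_flow (dims : nat -> nat) (L n : nat) (ell : R -> R)
    (z : nat -> nat -> R) (Wt : R -> net) : Prop :=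
  (forall t, 0 < t -> forall k i j, (1 <= k <= L)%nat -> (i < dims k)%nat ->
     (j < dims (k - 1)%nat)%nat ->
     exists g : R,
       derivable_pt_lim (fun x => risk dims L n ell z (upd (Wt t) k i j x))
                        (Wt t k i j) g /\
       derivable_pt_lim (fun s => Wt s k i j) t (- g)) /\
  (forall k i j, (1 <= k <= L)%nat -> (i < dims k)%nat ->
     (j < dims (k - 1)%nat)%nat ->
     forall eps, 0 < eps -> exists delta, 0 < delta /\
       forall t, 0 <= t < delta -> Rabs (Wt t k i j - Wt 0 k i j) < eps).

Definition D_init (dims : nat -> nat) (L : nat) (W0 : net) : R :=
  maxR1 L (fun k => frob2 (dims k) (dims (k - 1)%nat) (W0 k))
  - frob2 (dims L) (dims (L - 1)%nat) (W0 L)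
  + sumR (L - 1) (fun k0 => let k := S k0 in
      spec (dims k) (dims k)
        (matsub (matmul (dims (k - 1)%nat) (W0 k) (trmx (W0 k)))
                (matmul (dims (S k)) (trmx (W0 (S k))) (W0 (S k))))).

Definition tends_to_infty (f : R -> R) : Prop :=
  forall M, exists T, forall t, T <= t -> M <= f t.
Definition tends_to (f : R -> R) (l : R) : Prop :=
  forall eps, 0 < eps -> exists T, forall t, T <= t -> Rabs (f t - l) < eps.

(* Main.v *)
Require Import Defs.
From Stdlib Require Import Reals Lra Lia Arith ClassicalEpsilon.
Open Scope R_scope.


Lemma sumR_ext n f g : (forall i, (i < n)%nat -> f i = g i) -> sumR n f = sumR n g.
Proof. induction n; simpl; intros H; auto. rewrite IHn by (intros; apply H; lia). rewrite H by lia; auto. Qed.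

Lemma sumR_plus n f g : sumR n (fun i => f i + g i) = sumR n f + sumR n g.
Proof. induction n; simpl; [lra| rewrite IHn; lra]. Qed.

Lemma sumR_minus n f g : sumR n (fun i => f i - g i) = sumR n f - sumR n g.
Proof. induction n; simpl; [lra| rewrite IHn; lra]. Qed.

Lemma sumR_scal n c f : sumR n (fun i => c * f i) = c * sumR n f.
Proof. induction n; simpl; [lra| rewrite IHn; lra]. Qed.

Lemma sumR_scalr n c f : sumR n (fun i => f i * c) = sumR n f * c.
Proof. induction n; simpl; [lra| rewrite IHn; lra]. Qed.

Lemma sumR_zero n : sumR n (fun _ => 0) = 0.
Proof. induction n; simpl; lra. Qed.

Lemma sumR_swap n m (f : nat -> nat -> R) :
  sumR n (fun i => sumR m (fun j => f i j)) = sumR m (fun j => sumR n (fun i => f i j)).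
Proof.
  induction n; simpl. { now rewrite sumR_zero. }
  rewrite IHn, <- sumR_plus. reflexivity.
Qed.

Lemma sumR_nonneg n f : (forall i, (i < n)%nat -> 0 <= f i) -> 0 <= sumR n f.
Proof. induction n; simpl; intros H; [lra|]. assert (0 <= f n) by (apply H; lia).
  assert (0 <= sumR n f) by (apply IHn; intros; apply H; lia). lra. Qed.

Lemma sumR_le n f g : (forall i, (i < n)%nat -> f i <= g i) -> sumR n f <= sumR n g.
Proof. induction n; simpl; intros H; [lra|]. assert (f n <= g n) by (apply H; lia).
  assert (sumR n f <= sumR n g) by (apply IHn; intros; apply H; lia). lra. Qed.

Lemma sumR_delta n a f : (a < n)%nat ->
  sumR n (fun i => (if Nat.eqb i a then 1 else 0) * f i) = f a.
Proof.
  induction n; intros Ha; [lia|]. simpl.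
  destruct (Nat.eq_dec a n) as [->|Hne].
  - rewrite Nat.eqb_refl. rewrite (sumR_ext n _ (fun _ => 0)). rewrite sumR_zero; lra.
    intros i Hi. destruct (Nat.eqb_spec i n); [lia|lra].
  - rewrite IHn by lia. destruct (Nat.eqb_spec n a); [lia|lra].
Qed.

Lemma sumR_delta' n a f : (a < n)%nat ->
  sumR n (fun i => f i * (if Nat.eqb i a then 1 else 0)) = f a.
Proof. intros. rewrite <- (sumR_delta n a f) by auto. apply sumR_ext; intros; lra. Qed.

Lemma sumR_last n f : sumR (S n) f = sumR n f + f n.
Proof. reflexivity. Qed.

Lemma sumR_sq_expand n a b x y :
  sumR n (fun i => (a * y i - b * x i) ^ 2) =
  a^2 * sumR n (fun i => y i * y i) + b^2 * sumR n (fun i => x i * x i)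
  - 2 * a * b * sumR n (fun i => x i * y i).
Proof. induction n; [simpl; lra|]. rewrite !sumR_last, IHn. ring. Qed.

Lemma CS n x y :
  (sumR n (fun i => x i * y i))^2 <=
  sumR n (fun i => x i * x i) * sumR n (fun i => y i * y i).
Proof.
  induction n; simpl; [lra|].
  set (C := sumR n (fun i => x i * y i)) in *.
  set (A := sumR n (fun i => x i * x i)) in *.
  set (B := sumR n (fun i => y i * y i)) in *.
  assert (H := sumR_nonneg n (fun i => (x n * y i - y n * x i)^2)
            ltac:(intros; apply pow2_ge_0)).
  rewrite sumR_sq_expand in H. fold A B C in H.
  nra.
Qed.


Definition nsq n x := dot n x x.

Lemma nsq_nonneg n x : 0 <= nsq n x.
Proof. unfold nsq, dot. apply sumR_nonneg. intros; nra. Qed.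

Lemma vnorm_sq n x : vnorm n x ^ 2 = nsq n x.
Proof. unfold vnorm. simpl. rewrite Rmult_1_r. apply sqrt_sqrt. apply nsq_nonneg. Qed.

Lemma vnorm_nonneg n x : 0 <= vnorm n x.
Proof. apply sqrt_pos. Qed.

Lemma dot_sym n x y : dot n x y = dot n y x.
Proof. unfold dot. apply sumR_ext; intros; ring. Qed.

Lemma dot_ext n x x' y y' : (forall i, (i < n)%nat -> x i = x' i) ->
  (forall i, (i < n)%nat -> y i = y' i) -> dot n x y = dot n x' y'.
Proof. intros H1 H2. unfold dot. apply sumR_ext; intros. rewrite H1, H2; auto. Qed.

Lemma nsq_ext n x x' : (forall i, (i < n)%nat -> x i = x' i) -> nsq n x = nsq n x'.
Proof. intros; apply dot_ext; auto. Qed.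

Lemma CS_dot n x y : (dot n x y)^2 <= nsq n x * nsq n y.
Proof. apply CS. Qed.

Lemma nsq_scal n c x : nsq n (fun i => c * x i) = c^2 * nsq n x.
Proof. unfold nsq, dot. rewrite <- sumR_scal. apply sumR_ext; intros; ring. Qed.

Lemma matvec_scal m n A c x i : matvec m n A (fun j => c * x j) i = c * matvec m n A x i.
Proof. unfold matvec. rewrite <- sumR_scal. apply sumR_ext; intros; ring. Qed.

Lemma matvec_ext m n A B x y : (forall j, (j < n)%nat -> A j = A j) ->
  (forall i j, (j < n)%nat -> A i j = B i j) -> (forall j, (j < n)%nat -> x j = y j) ->
  forall i, matvec m n A x i = matvec m n B y i.
Proof. intros _ H1 H2 i. unfold matvec. apply sumR_ext; intros. rewrite H1, H2; auto. Qed.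

Lemma adjoint m n A u y :
  dot m u (matvec m n A y) = dot n (matvec n m (trmx A) u) y.
Proof.
  unfold dot, matvec, trmx.
  transitivity (sumR m (fun i => sumR n (fun j => u i * A i j * y j))).
  { apply sumR_ext; intros. rewrite <- sumR_scal. apply sumR_ext; intros; ring. }
  rewrite sumR_swap. apply sumR_ext; intros. rewrite <- sumR_scalr. apply sumR_ext; intros; ring.
Qed.

Lemma frob2_nonneg m n A : 0 <= frob2 m n A.
Proof. unfold frob2. apply sumR_nonneg; intros. apply sumR_nonneg; intros. apply pow2_ge_0. Qed.

Lemma frob_bound m n A x : nsq m (matvec m n A x) <= frob2 m n A * nsq n x.
Proof.
  unfold nsq, dot at 1, frob2. rewrite <- sumR_scalr. apply sumR_le. intros i Hi.
  unfold matvec. assert (H := CS n (A i) x).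
  replace (sumR n (fun j => A i j ^ 2)) with (sumR n (fun j => A i j * A i j))
    by (apply sumR_ext; intros; ring).
  unfold dot. nra.
Qed.

Lemma frob2_trmx m n A : frob2 n m (trmx A) = frob2 m n A.
Proof. unfold frob2, trmx. rewrite sumR_swap. reflexivity. Qed.

Lemma frob_bound_tr m n A u : nsq n (matvec n m (trmx A) u) <= frob2 m n A * nsq m u.
Proof. rewrite <- frob2_trmx. apply frob_bound. Qed.

Lemma spec_set_ub m n A r : spec_set m n A r -> r <= sqrt (frob2 m n A).
Proof.
  intros [x [Hx ->]]. unfold vnorm. apply sqrt_le_1_alt.
  pose proof (frob_bound m n A x). pose proof (frob2_nonneg m n A).
  pose proof (vnorm_sq n x). pose proof (vnorm_nonneg n x).
  fold (nsq m (matvec m n A x)). assert (nsq n x <= 1) by nra. nra.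
Qed.

Lemma spec_set_0 m n A : spec_set m n A 0.
Proof.
  exists (fun _ => 0). split.
  - unfold vnorm, dot. rewrite (sumR_ext _ _ (fun _ => 0)) by (intros; ring).
    rewrite sumR_zero, sqrt_0. lra.
  - unfold vnorm, dot, matvec. rewrite (sumR_ext _ _ (fun _ => 0)). rewrite sumR_zero, sqrt_0; auto.
    intros. rewrite (sumR_ext _ _ (fun _ => 0)) by (intros; ring). rewrite sumR_zero; ring.
Qed.

Lemma spec_lub m n A : is_lub (spec_set m n A) (spec m n A).
Proof.
  unfold spec. apply epsilon_spec.
  destruct (completeness (spec_set m n A)) as [s Hs].
  - exists (sqrt (frob2 m n A)). intros r Hr. apply spec_set_ub; auto.
  - exists 0. apply spec_set_0.
  - exists s; auto.
Qed.

Lemma spec_nonneg m n A : 0 <= spec m n A.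
Proof. destruct (spec_lub m n A) as [H _]. apply H. apply spec_set_0. Qed.

Lemma spec_le_frob m n A : spec m n A <= sqrt (frob2 m n A).
Proof. destruct (spec_lub m n A) as [_ H]. apply H. intros r Hr. apply spec_set_ub; auto. Qed.

Lemma spec_ge m n A x : nsq n x <= 1 -> vnorm m (matvec m n A x) <= spec m n A.
Proof.
  intros Hx. destruct (spec_lub m n A) as [H _]. apply H. exists x. split; auto.
  unfold vnorm. rewrite <- sqrt_1. apply sqrt_le_1_alt. auto.
Qed.

Lemma spec_bound m n A x : nsq m (matvec m n A x) <= (spec m n A)^2 * nsq n x.
Proof.
  pose proof (nsq_nonneg n x) as Hx0.
  destruct (Req_dec (nsq n x) 0) as [H0|H0].
  - pose proof (frob_bound m n A x). pose proof (nsq_nonneg m (matvec m n A x)).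
    rewrite H0 in *. lra.
  - set (c := / sqrt (nsq n x)).
    assert (Hs : 0 < sqrt (nsq n x)) by (apply sqrt_lt_R0; lra).
    assert (Hc2 : c ^ 2 * nsq n x = 1).
    { unfold c. rewrite <- (sqrt_sqrt (nsq n x)) at 2 by lra. field. lra. }
    assert (H1 : nsq n (fun j => c * x j) = 1) by (rewrite nsq_scal; auto).
    assert (H2 := spec_ge m n A (fun j => c * x j) ltac:(lra)).
    assert (H3 : nsq m (matvec m n A (fun j => c * x j)) = c^2 * nsq m (matvec m n A x)).
    { rewrite <- nsq_scal. apply nsq_ext. intros; apply matvec_scal. }
    pose proof (vnorm_sq m (matvec m n A (fun j => c * x j))).
    pose proof (vnorm_nonneg m (matvec m n A (fun j => c * x j))).
    pose proof (spec_nonneg m n A).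
    assert (H4x : c^2 * nsq m (matvec m n A x) <= spec m n A ^ 2) by nra.
    assert (Hc : 0 < c^2) by (unfold c; apply pow_lt; apply Rinv_0_lt_compat; auto).
    apply Rmult_le_reg_l with (c^2); auto. nra.
Qed.

Lemma spec_le m n A B : 0 <= B ->
  (forall x, nsq n x <= 1 -> nsq m (matvec m n A x) <= B^2) -> spec m n A <= B.
Proof.
  intros HB H. destruct (spec_lub m n A) as [_ Hl]. apply Hl.
  intros r [x [Hx ->]]. rewrite <- (sqrt_pow2 B) by auto. apply sqrt_le_1_alt.
  apply H. pose proof (vnorm_sq n x). pose proof (vnorm_nonneg n x). nra.
Qed.

Lemma spec_ext m n A B : (forall i j, (i < m)%nat -> (j < n)%nat -> A i j = B i j) ->
  spec m n A = spec m n B.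
Proof.
  intros H. apply Rle_antisym; apply spec_le; try apply spec_nonneg; intros x Hx.
  - rewrite (nsq_ext m _ (matvec m n B x)). apply (Rle_trans _ _ _ (spec_bound m n B x)).
    pose proof (spec_nonneg m n B). nra. intros. unfold matvec. apply sumR_ext; intros. rewrite H; auto.
  - rewrite (nsq_ext m _ (matvec m n A x)). apply (Rle_trans _ _ _ (spec_bound m n A x)).
    pose proof (spec_nonneg m n A). nra. intros. unfold matvec. apply sumR_ext; intros. rewrite H; auto.
Qed.

Lemma spec_bound_tr m n A u : nsq n (matvec n m (trmx A) u) <= (spec m n A)^2 * nsq m u.
Proof.
  set (y := matvec n m (trmx A) u).
  assert (E : dot m u (matvec m n A y) = nsq n y) by (rewrite adjoint; reflexivity).
  pose proof (CS_dot m u (matvec m n A y)). rewrite E in H.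
  pose proof (spec_bound m n A y). pose proof (nsq_nonneg n y). pose proof (nsq_nonneg m u).
  pose proof (nsq_nonneg m (matvec m n A y)).
  destruct (Req_dec (nsq n y) 0) as [Hy0|Hy0].
  - rewrite Hy0. nra.
  - assert (nsq n y * nsq n y <= nsq n y * (spec m n A ^2 * nsq m u)) by nra.
    apply Rmult_le_reg_l with (nsq n y); lra.
Qed.

Lemma spec_sq_le_frob2 m n A : spec m n A ^ 2 <= frob2 m n A.
Proof.
  pose proof (spec_le_frob m n A). pose proof (spec_nonneg m n A).
  pose proof (frob2_nonneg m n A). pose proof (sqrt_sqrt _ H1).
  nra.
Qed.


Lemma sumR_ge_term n f a : (a < n)%nat -> (forall i, (i < n)%nat -> 0 <= f i) -> f a <= sumR n f.
Proof.
  induction n; intros Ha H; [lia|]. simpl.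
  destruct (Nat.eq_dec a n) as [->|].
  - pose proof (sumR_nonneg n f ltac:(intros; apply H; lia)). lra.
  - assert (f a <= sumR n f) by (apply IHn; [lia| intros; apply H; lia]).
    assert (0 <= f n) by (apply H; lia). lra.
Qed.

Lemma spec_row n A : spec 1 n A ^ 2 = frob2 1 n A.
Proof.
  apply Rle_antisym; [apply spec_sq_le_frob2|].
  pose proof (spec_bound 1 n A (A 0%nat)).
  unfold nsq at 1, dot, matvec in H. simpl in H.
  assert (E : frob2 1 n A = sumR n (fun j => A 0%nat j * A 0%nat j)).
  { unfold frob2. simpl. rewrite Rplus_0_l. apply sumR_ext; intros; ring. }
  assert (E2 : nsq n (A 0%nat) = frob2 1 n A) by (rewrite E; reflexivity).
  rewrite E2, <- E in H. pose proof (frob2_nonneg 1 n A).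
  pose proof (spec_nonneg 1 n A).
  destruct (Req_dec (frob2 1 n A) 0) as [Z|Z]. { rewrite Z. nra. }
  assert (frob2 1 n A * frob2 1 n A <= frob2 1 n A * spec 1 n A ^ 2) by nra.
  apply Rmult_le_reg_l with (frob2 1 n A); lra.
Qed.

Definition evec (j : nat) : nat -> R := fun i => if Nat.eqb i j then 1 else 0.

Lemma nsq_evec n j : (j < n)%nat -> nsq n (evec j) = 1.
Proof. intros. unfold nsq, dot. transitivity (evec j j).
  2:{ unfold evec; rewrite Nat.eqb_refl; auto. }
  rewrite <- (sumR_delta n j (fun i => evec j i)) by auto.
  apply sumR_ext; intros. unfold evec. destruct (Nat.eqb i j); ring. Qed.

Lemma matvec_evec m n A j i : (j < n)%nat -> matvec m n A (evec j) i = A i j.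
Proof. intros. unfold matvec, evec. apply sumR_delta'; auto. Qed.

Lemma spec_pos m n A i j : (i < m)%nat -> (j < n)%nat -> A i j <> 0 -> 0 < spec m n A.
Proof.
  intros Hi Hj Hne. pose proof (spec_bound m n A (evec j)). rewrite nsq_evec in H by auto.
  assert (A i j ^ 2 <= nsq m (matvec m n A (evec j))).
  { unfold nsq, dot. rewrite <- (matvec_evec m n A j i) by auto. simpl. rewrite Rmult_1_r.
    apply (sumR_ge_term m (fun i0 => matvec m n A (evec j) i0 * matvec m n A (evec j) i0)); auto.
    intros; nra. }
  assert (0 < A i j ^ 2) by (apply pow_lt_0_compat_abs || (simpl; rewrite Rmult_1_r; apply Rsqr_pos_lt; auto)).
  pose proof (spec_nonneg m n A).
  destruct (Req_dec (spec m n A) 0) as [Z|Z]; [|lra]. rewrite Z in H. lra.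
Qed.

Definition gT (A : nat -> nat -> R) r p q := sumR r (fun c => A p c * A q c).
Definition gN (A : nat -> nat -> R) r p q := sumR r (fun e => A e p * A e q).

Lemma quad_gT a b M w : nsq b (matvec b a (trmx M) w) =
  sumR a (fun p => sumR a (fun q => w p * w q * gT M b p q)).
Proof.
  unfold nsq, dot, matvec, trmx, gT.
  transitivity (sumR b (fun c => sumR a (fun p => sumR a (fun q => w p * w q * (M p c * M q c))))).
  { apply sumR_ext; intros c _. rewrite <- !sumR_scalr. apply sumR_ext; intros p _.
    rewrite <- !sumR_scal. apply sumR_ext; intros; ring. }
  rewrite sumR_swap. apply sumR_ext; intros p _. rewrite sumR_swap. apply sumR_ext; intros q _.
  rewrite <- sumR_scal. reflexivity.
Qed.

Lemma quad_gN a c N w : nsq c (matvec c a N w) =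
  sumR a (fun p => sumR a (fun q => w p * w q * gN N c p q)).
Proof.
  unfold nsq, dot, matvec, gN.
  transitivity (sumR c (fun e => sumR a (fun p => sumR a (fun q => w p * w q * (N e p * N e q))))).
  { apply sumR_ext; intros e _. rewrite <- !sumR_scalr. apply sumR_ext; intros p _.
    rewrite <- !sumR_scal. apply sumR_ext; intros; ring. }
  rewrite sumR_swap. apply sumR_ext; intros p _. rewrite sumR_swap. apply sumR_ext; intros q _.
  rewrite <- sumR_scal. reflexivity.
Qed.

Definition Dmat b c (M N : nat -> nat -> R) :=
  matsub (matmul b M (trmx M)) (matmul c (trmx N) N).

Lemma quad_Delta a b c M N w :
  dot a w (matvec a a (Dmat b c M N) w) = nsq b (matvec b a (trmx M) w) - nsq c (matvec c a N w).
Proof.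
  rewrite quad_gT, quad_gN, <- sumR_minus. unfold dot, matvec, Dmat, matsub, matmul, trmx.
  apply sumR_ext; intros p _. rewrite <- sumR_minus, <- sumR_scal. apply sumR_ext; intros q _.
  unfold gT, gN. ring.
Qed.

Lemma quad_Delta_bound a b c M N w :
  Rabs (nsq b (matvec b a (trmx M) w) - nsq c (matvec c a N w))
  <= spec a a (Dmat b c M N) * nsq a w.
Proof.
  rewrite <- quad_Delta. set (Dl := Dmat b c M N).
  pose proof (CS_dot a w (matvec a a Dl w)). pose proof (spec_bound a a Dl w).
  pose proof (nsq_nonneg a w). pose proof (spec_nonneg a a Dl).
  pose proof (nsq_nonneg a (matvec a a Dl w)).
  set (x := dot a w (matvec a a Dl w)) in *.
  assert (x^2 <= (spec a a Dl * nsq a w)^2) by nra.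
  assert (0 <= spec a a Dl * nsq a w) by nra.
  apply Rabs_le; split; nra.
Qed.

Lemma balance_transfer a b c M N M0 N0 :
  (forall p q, (p < a)%nat -> (q < a)%nat -> gT M b p q - gN N c p q = gT M0 b p q - gN N0 c p q) ->
  forall w, nsq b (matvec b a (trmx M) w) - nsq c (matvec c a N w) =
            nsq b (matvec b a (trmx M0) w) - nsq c (matvec c a N0 w).
Proof.
  intros H w. rewrite !quad_gT, !quad_gN, <- !sumR_minus. apply sumR_ext; intros p Hp.
  rewrite <- !sumR_minus. apply sumR_ext; intros q Hq.
  replace (w p * w q * gT M b p q - w p * w q * gN N c p q) with (w p * w q * (gT M b p q - gN N c p q)) by ring.
  rewrite H by auto. ring.
Qed.


Fixpoint aboveF (dims : nat -> nat) (W : net) (d k : nat) : nat -> R :=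
  match d with
  | O => fun c => if Nat.eqb c 0 then 1 else 0
  | S d' => fun c => sumR (dims (S k)) (fun e => aboveF dims W d' (S k) e * W (S k) e c)
  end.

Lemma aboveF_S dims W d k c :
  aboveF dims W (S d) k c = sumR (dims (S k)) (fun e => aboveF dims W d (S k) e * W (S k) e c).
Proof. reflexivity. Qed.

Lemma prodmat_S dims W k i m :
  prodmat dims W (S k) i m = sumR (dims k) (fun q => W (S k) i q * prodmat dims W k q m).
Proof. reflexivity. Qed.

Lemma wprod_decomp dims L W : dims L = 1%nat ->
  forall d k, (k + d = L)%nat -> forall m,
  wprod dims L W m = sumR (dims k) (fun i => aboveF dims W d k i * prodmat dims W k i m).
Proof.
  intros HL d. induction d; intros k Hk m.
  - replace k with L by lia. rewrite HL. simpl. unfold wprod. ring.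
  - rewrite (IHd (S k)) by lia.
    rewrite (sumR_ext (dims k) _ (fun i => sumR (dims (S k)) (fun e => aboveF dims W d (S k) e * W (S k) e i) * prodmat dims W k i m)) by (intros; rewrite aboveF_S; auto).
    transitivity (sumR (dims (S k)) (fun e => sumR (dims k) (fun i =>
       aboveF dims W d (S k) e * W (S k) e i * prodmat dims W k i m))).
    { apply sumR_ext; intros e _. rewrite prodmat_S, <- sumR_scal. apply sumR_ext; intros; ring. }
    rewrite sumR_swap. apply sumR_ext; intros i _. rewrite <- sumR_scalr. reflexivity.
Qed.

Lemma aboveF_ext dims W W' d : forall k,
  (forall l e c, (k < l)%nat -> W' l e c = W l e c) ->
  forall c, aboveF dims W' d k c = aboveF dims W d k c.
Proof.
  induction d; intros k H c; simpl; auto.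
  apply sumR_ext; intros e _. rewrite IHd. rewrite H by lia. auto.
  intros; apply H; lia.
Qed.

Lemma prodmat_ext dims W W' k :
  (forall l e c, (1 <= l <= k)%nat -> W' l e c = W l e c) ->
  forall i m, prodmat dims W' k i m = prodmat dims W k i m.
Proof.
  induction k; intros H i m; simpl; auto.
  unfold matmul. apply sumR_ext; intros q _. rewrite IHk, H by (try intros; try apply H; lia). auto.
Qed.

Lemma upd_same W k i j x i' j' :
  upd W k i j x k i' j' = W k i' j' +
    (if Nat.eqb i' i then 1 else 0) * (if Nat.eqb j' j then 1 else 0) * (x - W k i j).
Proof.
  unfold upd. rewrite Nat.eqb_refl. simpl.
  destruct (Nat.eqb_spec i' i); destruct (Nat.eqb_spec j' j); simpl; subst; ring.
Qed.

Lemma upd_other W k i j x l e c : l <> k -> upd W k i j x l e c = W l e c.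
Proof. intros. unfold upd. destruct (Nat.eqb_spec l k); [lia|]. reflexivity. Qed.

Lemma wprod_upd dims L W k i j x : dims L = 1%nat -> (1 <= k <= L)%nat ->
  (i < dims k)%nat -> (j < dims (k - 1))%nat -> forall m,
  wprod dims L (upd W k i j x) m =
  wprod dims L W m + (x - W k i j) * (aboveF dims W (L - k) k i * prodmat dims W (k - 1) j m).
Proof.
  intros HL Hk Hi Hj m.
  rewrite !(wprod_decomp dims L _ HL (L - k) k) by lia.
  destruct k as [|k']; [lia|]. replace (S k' - 1)%nat with k' in * by lia.
  transitivity (sumR (dims (S k')) (fun i0 => aboveF dims W (L - S k') (S k') i0 * prodmat dims W (S k') i0 m)
    + sumR (dims (S k')) (fun i0 => (if Nat.eqb i0 i then 1 else 0) *
       (aboveF dims W (L - S k') (S k') i0 * ((x - W (S k') i j) * prodmat dims W k' j m)))).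
  2:{ rewrite sumR_delta by auto. ring. }
  rewrite <- sumR_plus. apply sumR_ext; intros i0 _. rewrite !prodmat_S.
  rewrite (aboveF_ext dims W (upd W (S k') i j x)) by (intros; apply upd_other; lia).
  transitivity (aboveF dims W (L - S k') (S k') i0 * (sumR (dims k') (fun q => W (S k') i0 q * prodmat dims W k' q m)
    + sumR (dims k') (fun q => (if Nat.eqb q j then 1 else 0) *
         ((if Nat.eqb i0 i then 1 else 0) * (x - W (S k') i j) * prodmat dims W k' q m)))).
  2:{ rewrite sumR_delta by auto. ring. }
  rewrite <- sumR_plus. f_equal. apply sumR_ext; intros q _.
  rewrite upd_same. rewrite (prodmat_ext dims W (upd W (S k') i j x)) by (intros; apply upd_other; lia).
  ring.
Qed.

Lemma derivable_pt_lim_ext f g x l : (forall y, f y = g y) ->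
  derivable_pt_lim g x l -> derivable_pt_lim f x l.
Proof. intros H D eps He. destruct (D eps He) as [del Hd]. exists del. intros h Hh Hh2.
  rewrite !H. apply Hd; auto. Qed.

Lemma deriv_sumR n (f : nat -> R -> R) f' x :
  (forall l, (l < n)%nat -> derivable_pt_lim (f l) x (f' l)) ->
  derivable_pt_lim (fun y => sumR n (fun l => f l y)) x (sumR n f').
Proof.
  induction n; intros H; simpl.
  - apply (derivable_pt_lim_const 0).
  - apply (derivable_pt_lim_plus (fun y => sumR n (fun l => f l y)) (f n)).
    apply IHn; intros; apply H; lia. apply H; lia.
Qed.

Lemma deriv_affine s g w0 x : derivable_pt_lim (fun y => s + (y - w0) * g) x g.
Proof.
  intros eps He. exists (mkposreal 1 Rlt_0_1). intros h Hh _.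
  replace ((s + (x + h - w0) * g - (s + (x - w0) * g)) / h - g) with 0 by (field; auto).
  rewrite Rabs_R0; auto.
Qed.

Definition Gv dims L n (ell' : R -> R) (z : nat -> nat -> R) W m :=
  / INR n * sumR n (fun l => ell' (dot (dims O) (wprod dims L W) (z l)) * z l m).
Definition bvec dims L n ell' z W k c :=
  sumR (dims O) (fun m => prodmat dims W k c m * Gv dims L n ell' z W m).

Lemma grad_formula dims L n ell ell' z W k i j :
  dims L = 1%nat -> (forall s, derivable_pt_lim ell s (ell' s)) ->
  (1 <= k <= L)%nat -> (i < dims k)%nat -> (j < dims (k - 1))%nat ->
  derivable_pt_lim (fun x => risk dims L n ell z (upd W k i j x)) (W k i j)
    (aboveF dims W (L - k) k i * bvec dims L n ell' z W (k - 1) j).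
Proof.
  intros HL Hell Hk Hi Hj.
  set (w0 := W k i j). set (a := aboveF dims W (L - k) k i).
  set (s := fun l => dot (dims O) (wprod dims L W) (z l)).
  set (g := fun l => dot (dims O) (fun m => a * prodmat dims W (k - 1) j m) (z l)).
  apply derivable_pt_lim_ext with
    (fun x => / INR n * sumR n (fun l => ell (s l + (x - w0) * g l))).
  { intros x. unfold risk. f_equal. apply sumR_ext; intros l _. f_equal.
    unfold s, g, dot. rewrite <- sumR_scal, <- sumR_plus. apply sumR_ext; intros m _.
    rewrite wprod_upd by auto. fold w0 a. ring. }
  replace (a * bvec dims L n ell' z W (k - 1) j)
    with (/ INR n * sumR n (fun l => ell' (s l) * g l)).
  - apply (derivable_pt_lim_scal (fun x => sumR n (fun l => ell (s l + (x - w0) * g l)))).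
    apply (deriv_sumR n (fun l x => ell (s l + (x - w0) * g l))). intros l _.
    replace (ell' (s l) * g l) with (ell' (s l + (w0 - w0) * g l) * g l) by (f_equal; f_equal; ring).
    apply (derivable_pt_lim_comp (fun y => s l + (y - w0) * g l) ell). apply deriv_affine. apply Hell.
  - unfold bvec, Gv, g, dot. fold s.
    transitivity (/ INR n * sumR n (fun l => sumR (dims O) (fun m => a * prodmat dims W (k-1) j m * ell' (s l) * z l m))).
    { f_equal. apply sumR_ext; intros l _. rewrite <- sumR_scal. apply sumR_ext; intros; ring. }
    rewrite sumR_swap. rewrite <- !sumR_scal. apply sumR_ext; intros m _.
    rewrite <- !sumR_scal. apply sumR_ext; intros l _. unfold s, dot. ring.
Qed.


Lemma flow_deriv dims L n ell ell' z Wt t k i j :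
  is_gradient_flow dims L n ell z Wt -> dims L = 1%nat ->
  (forall s, derivable_pt_lim ell s (ell' s)) -> 0 < t ->
  (1 <= k <= L)%nat -> (i < dims k)%nat -> (j < dims (k - 1)%nat)%nat ->
  derivable_pt_lim (fun s => Wt s k i j) t
    (- (aboveF dims (Wt t) (L - k) k i * bvec dims L n ell' z (Wt t) (k - 1) j)).
Proof.
  intros [F _] HL Hell Ht Hk Hi Hj.
  destruct (F t Ht k i j Hk Hi Hj) as [g [Hg1 Hg2]].
  pose proof (grad_formula dims L n ell ell' z (Wt t) k i j HL Hell Hk Hi Hj).
  rewrite (uniqueness_limite _ _ _ _ H Hg1). auto.
Qed.

Lemma b_rec dims L n ell' z W k q :
  sumR (dims k) (fun c => W (S k) q c * bvec dims L n ell' z W k c) = bvec dims L n ell' z W (S k) q.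
Proof.
  unfold bvec. rewrite (sumR_ext (dims O) (fun m => prodmat dims W (S k) q m * _)
     (fun m => sumR (dims k) (fun c => W (S k) q c * prodmat dims W k c m * Gv dims L n ell' z W m))).
  - rewrite sumR_swap. apply sumR_ext; intros c _. rewrite <- sumR_scal. apply sumR_ext; intros; ring.
  - intros m _. rewrite prodmat_S, <- sumR_scalr. apply sumR_ext; intros; ring.
Qed.

Lemma a_rec dims W L k q : (k < L)%nat ->
  sumR (dims (S k)) (fun e => aboveF dims W (L - S k) (S k) e * W (S k) e q) = aboveF dims W (L - k) k q.
Proof. intros. replace (L - k)%nat with (S (L - S k)) by lia. reflexivity. Qed.

Lemma balance_deriv dims L n ell ell' z Wt t k p q :
  is_gradient_flow dims L n ell z Wt -> dims L = 1%nat ->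
  (forall s, derivable_pt_lim ell s (ell' s)) -> 0 < t ->
  (1 <= k < L)%nat -> (p < dims k)%nat -> (q < dims k)%nat ->
  derivable_pt_lim (fun s => gT (Wt s k) (dims (k - 1)%nat) p q - gN (Wt s (S k)) (dims (S k)) p q) t 0.
Proof.
  intros Hf HL Hell Ht Hk Hp Hq.
  set (A := aboveF dims (Wt t) (L - k) k).
  set (A1 := aboveF dims (Wt t) (L - S k) (S k)).
  set (B0 := bvec dims L n ell' z (Wt t) (k - 1)).
  set (B1 := bvec dims L n ell' z (Wt t) k).
  assert (H1 : derivable_pt_lim (fun s => gT (Wt s k) (dims (k - 1)%nat) p q) t
     (sumR (dims (k - 1)%nat) (fun c => (- (A p * B0 c)) * Wt t k q c + Wt t k p c * (- (A q * B0 c))))).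
  { unfold gT. apply (deriv_sumR _ (fun c s => Wt s k p c * Wt s k q c)). intros c Hc.
    apply (derivable_pt_lim_mult (fun s => Wt s k p c) (fun s => Wt s k q c));
      apply (flow_deriv dims L n ell ell' z Wt); auto; lia. }
  assert (H2 : derivable_pt_lim (fun s => gN (Wt s (S k)) (dims (S k)) p q) t
     (sumR (dims (S k)) (fun e => (- (A1 e * B1 p)) * Wt t (S k) e q + Wt t (S k) e p * (- (A1 e * B1 q))))).
  { unfold gN. apply (deriv_sumR _ (fun e s => Wt s (S k) e p * Wt s (S k) e q)). intros e He.
    assert (E : (S k - 1)%nat = k) by lia.
    apply (derivable_pt_lim_mult (fun s => Wt s (S k) e p) (fun s => Wt s (S k) e q)).
    - pose proof (flow_deriv dims L n ell ell' z Wt t (S k) e p Hf HL Hell Ht ltac:(lia) He ltac:(rewrite E; auto)).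
      rewrite E in H. exact H.
    - pose proof (flow_deriv dims L n ell ell' z Wt t (S k) e q Hf HL Hell Ht ltac:(lia) He ltac:(rewrite E; auto)).
      rewrite E in H. exact H. }
  assert (V : sumR (dims (k - 1)%nat) (fun c => (- (A p * B0 c)) * Wt t k q c + Wt t k p c * (- (A q * B0 c)))
     - sumR (dims (S k)) (fun e => (- (A1 e * B1 p)) * Wt t (S k) e q + Wt t (S k) e p * (- (A1 e * B1 q))) = 0).
  { destruct k as [|k']; [lia|]. replace (S k' - 1)%nat with k' in * by lia.
    assert (Eb : forall r, sumR (dims k') (fun c => Wt t (S k') r c * B0 c) = B1 r) by (intros; unfold B0, B1; replace (S k' - 1)%nat with k' by lia; apply b_rec).
    assert (Ea : forall r, sumR (dims (S (S k'))) (fun e => A1 e * Wt t (S (S k')) e r) = A r)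
      by (intros; apply a_rec; lia).
    rewrite (sumR_ext _ _ (fun c => - A p * (Wt t (S k') q c * B0 c) + - A q * (Wt t (S k') p c * B0 c)))
      by (intros; ring).
    rewrite (sumR_ext (dims (S (S k'))) _ (fun e => - B1 p * (A1 e * Wt t (S (S k')) e q) + - B1 q * (A1 e * Wt t (S (S k')) e p)))
      by (intros; ring).
    rewrite !sumR_plus, !sumR_scal, !Eb, !Ea. ring. }
  rewrite <- V. apply (derivable_pt_lim_minus (fun s => gT (Wt s k) (dims (k - 1)%nat) p q)
     (fun s => gN (Wt s (S k)) (dims (S k)) p q)); auto.
Qed.

Lemma const_pos f : (forall s, 0 < s -> derivable_pt_lim f s 0) ->
  forall s1 s2, 0 < s1 -> 0 < s2 -> f s1 = f s2.
Proof.
  intros H s1 s2 H1 H2.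
  assert (K : forall a b, 0 < a -> a < b -> f a = f b).
  { intros a b Ha Hab. destruct (MVT_cor2 f (fun _ => 0) a b Hab) as [c [Hc _]].
    intros c Hc. apply H. lra. lra. }
  destruct (Rtotal_order s1 s2) as [h|[h|h]]; [apply K; auto|subst; auto|symmetry; apply K; auto].
Qed.

Lemma limit_sumR n (f : nat -> R -> R) v D x0 :
  (forall l, (l < n)%nat -> limit1_in (f l) D (v l) x0) ->
  limit1_in (fun s => sumR n (fun l => f l s)) D (sumR n v) x0.
Proof.
  induction n; intros H; simpl.
  - intros eps He. exists 1. split; [lra|]. intros x _. simpl. unfold R_dist. replace (0 - 0) with 0 by ring. rewrite Rabs_R0. auto.
  - apply (limit_plus (fun s => sumR n (fun l => f l s)) (f n)). apply IHn; intros; apply H; lia. apply H; lia.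
Qed.

Lemma eq_of_close a b : (forall eps, 0 < eps -> Rabs (a - b) < eps) -> a = b.
Proof.
  intros H. destruct (Req_dec a b); auto. exfalso.
  assert (0 < Rabs (a - b)) by (apply Rabs_pos_lt; lra). specialize (H _ H1). lra.
Qed.

Lemma balanced dims L n ell ell' z Wt :
  is_gradient_flow dims L n ell z Wt -> dims L = 1%nat ->
  (forall s, derivable_pt_lim ell s (ell' s)) ->
  forall t, 0 <= t -> forall k p q, (1 <= k < L)%nat -> (p < dims k)%nat -> (q < dims k)%nat ->
  gT (Wt t k) (dims (k - 1)%nat) p q - gN (Wt t (S k)) (dims (S k)) p q =
  gT (Wt 0 k) (dims (k - 1)%nat) p q - gN (Wt 0 (S k)) (dims (S k)) p q.
Proof.
  intros Hf HL Hell t Ht k p q Hk Hp Hq.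
  set (f := fun s => gT (Wt s k) (dims (k - 1)%nat) p q - gN (Wt s (S k)) (dims (S k)) p q).
  change (f t = f 0).
  assert (Hc : forall s1 s2, 0 < s1 -> 0 < s2 -> f s1 = f s2).
  { apply const_pos. intros s Hs. apply (balance_deriv dims L n ell ell' z Wt); auto. }
  assert (Hent : forall k i j, (1 <= k <= L)%nat -> (i < dims k)%nat -> (j < dims (k - 1)%nat)%nat ->
     limit1_in (fun s => Wt s k i j) (fun s => 0 <= s) (Wt 0 k i j) 0).
  { intros k0 i j Hk0 Hi Hj eps He. destruct Hf as [_ F].
    destruct (F k0 i j Hk0 Hi Hj eps He) as [del [Hd Hd2]]. exists del. split; auto.
    intros x [Hx1 Hx2]. simpl in *. unfold R_dist in *. rewrite Rminus_0_r in Hx2.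
    apply Hd2. rewrite Rabs_right in Hx2 by lra. lra. }
  assert (Hl : limit1_in f (fun s => 0 <= s) (f 0) 0).
  { unfold f, gT, gN. apply limit_minus; apply limit_sumR; intros l Hl; apply limit_mul; apply Hent; try lia.
    all: replace (S k - 1)%nat with k by lia; auto. }
  assert (E : f 1 = f 0).
  { apply eq_of_close. intros eps He. destruct (Hl eps He) as [alp [Ha Ha2]].
    set (x := Rmin (alp / 2) 1).
    assert (0 < x) by (unfold x; apply Rmin_pos; lra).
    assert (x < alp) by (unfold x; pose proof (Rmin_l (alp/2) 1); lra).
    rewrite <- (Hc x 1) by lra. apply Ha2. split; [lra|]. simpl. unfold R_dist. rewrite Rminus_0_r, Rabs_right; lra. }
  destruct (Req_dec t 0) as [->|Hn]; auto. rewrite <- E. apply Hc; lra.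
Qed.


Definition sp dims (W : net) k := spec (dims k) (dims (k-1)%nat) (W k).
Definition fr2 dims (W : net) k := frob2 (dims k) (dims (k-1)%nat) (W k).
Definition eD dims (W0 : net) k := spec (dims k) (dims k) (Dmat (dims (k-1)%nat) (dims (S k)) (W0 k) (W0 (S k))).

Lemma D_eq dims L W0 : D_init dims L W0 =
  maxR1 L (fr2 dims W0) - fr2 dims W0 L + sumR (L - 1) (fun k0 => eD dims W0 (S k0)).
Proof. reflexivity. Qed.

Lemma Rabs_le_between a b : Rabs a <= b -> - b <= a <= b.
Proof. intros H. pose proof (Rle_abs a). pose proof (Rle_abs (-a)). rewrite Rabs_Ropp in H1. lra. Qed.

Lemma maxR1_ge L f k : (1 <= k <= L)%nat -> f k <= maxR1 L f.
Proof.
  induction L; intros H; [lia|]. simpl.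
  destruct (Nat.eq_dec k (S L)) as [->|]. apply Rmax_r.
  eapply Rle_trans; [apply IHL; lia| apply Rmax_l].
Qed.

Lemma maxR1_le L f B : 0 <= B -> (forall k, (1 <= k <= L)%nat -> f k <= B) -> maxR1 L f <= B.
Proof.
  induction L; intros HB H; simpl; auto. apply Rmax_lub. apply IHL; auto; intros; apply H; lia. apply H; lia.
Qed.

Section Flow.
Variables (dims : nat -> nat) (L n : nat) (ell ell' : R -> R) (z : nat -> nat -> R) (Wt : R -> net).
Hypothesis Hf : is_gradient_flow dims L n ell z Wt.
Hypothesis HL : dims L = 1%nat.
Hypothesis Hell : forall s, derivable_pt_lim ell s (ell' s).

Lemma quad_time t k w : 0 <= t -> (1 <= k < L)%nat ->
  nsq (dims (k-1)%nat) (matvec (dims (k-1)%nat) (dims k) (trmx (Wt t k)) w)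
  - nsq (dims (S k)) (matvec (dims (S k)) (dims k) (Wt t (S k)) w) =
  nsq (dims (k-1)%nat) (matvec (dims (k-1)%nat) (dims k) (trmx (Wt 0 k)) w)
  - nsq (dims (S k)) (matvec (dims (S k)) (dims k) (Wt 0 (S k)) w).
Proof.
  intros Ht Hk. apply balance_transfer. intros p q Hp Hq.
  apply (balanced dims L n ell ell' z Wt); auto.
Qed.

Lemma quad_time_bound t k w : 0 <= t -> (1 <= k < L)%nat ->
  Rabs (nsq (dims (k-1)%nat) (matvec (dims (k-1)%nat) (dims k) (trmx (Wt t k)) w)
  - nsq (dims (S k)) (matvec (dims (S k)) (dims k) (Wt t (S k)) w)) <= eD dims (Wt 0) k * nsq (dims k) w.
Proof. intros. rewrite quad_time by auto. apply quad_Delta_bound. Qed.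

Lemma frob_step t k : 0 <= t -> (1 <= k < L)%nat ->
  fr2 dims (Wt t) k - fr2 dims (Wt t) (S k) = fr2 dims (Wt 0) k - fr2 dims (Wt 0) (S k).
Proof.
  intros Ht Hk.
  assert (E : forall W : net, fr2 dims W k - fr2 dims W (S k) =
     sumR (dims k) (fun p => gT (W k) (dims (k-1)%nat) p p - gN (W (S k)) (dims (S k)) p p)).
  { intros W. unfold fr2, frob2, gT, gN. replace (S k - 1)%nat with k by lia.
    rewrite sumR_minus. f_equal. apply sumR_ext; intros; apply sumR_ext; intros; ring.
    rewrite sumR_swap. apply sumR_ext; intros; apply sumR_ext; intros; ring. }
  rewrite !E. apply sumR_ext; intros p Hp. apply (balanced dims L n ell ell' z Wt); auto.
Qed.

Lemma frob_tele t : 0 <= t -> forall k, (1 <= k <= L)%nat ->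
  fr2 dims (Wt t) k - fr2 dims (Wt t) L = fr2 dims (Wt 0) k - fr2 dims (Wt 0) L.
Proof.
  intros Ht. assert (forall d k, (k + d = L)%nat -> (1 <= k)%nat ->
    fr2 dims (Wt t) k - fr2 dims (Wt t) L = fr2 dims (Wt 0) k - fr2 dims (Wt 0) L).
  { induction d; intros k Hk H1.
    - replace L with k by lia. ring.
    - pose proof (IHd (S k) ltac:(lia) ltac:(lia)). pose proof (frob_step t k Ht ltac:(lia)). lra. }
  intros k Hk. apply (H (L - k)%nat); lia.
Qed.

Lemma spec_chain t k : 0 <= t -> (1 <= k < L)%nat ->
  sp dims (Wt t) (S k) ^ 2 <= sp dims (Wt t) k ^ 2 + eD dims (Wt 0) k.
Proof.
  intros Ht Hk. unfold sp. replace (S k - 1)%nat with k by lia.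
  pose proof (spec_nonneg (dims k) (dims (k-1)%nat) (Wt t k)).
  assert (He : 0 <= eD dims (Wt 0) k) by apply spec_nonneg.
  assert (spec (dims (S k)) (dims k) (Wt t (S k)) <= sqrt (spec (dims k) (dims (k-1)%nat) (Wt t k) ^ 2 + eD dims (Wt 0) k)).
  { apply spec_le. apply sqrt_pos. intros x Hx.
    rewrite pow2_sqrt by nra.
    pose proof (quad_time_bound t k x Ht Hk) as Q. pose proof (spec_bound_tr (dims k) (dims (k-1)%nat) (Wt t k) x).
    pose proof (nsq_nonneg (dims k) x).
    apply Rabs_le_between in Q. nra. }
  pose proof (spec_nonneg (dims (S k)) (dims k) (Wt t (S k))).
  assert (H3 : 0 <= spec (dims k) (dims (k-1)%nat) (Wt t k) ^ 2 + eD dims (Wt 0) k) by nra.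
  pose proof (sqrt_sqrt _ H3). nra.
Qed.

Definition Tk k := sumR (L - 1) (fun k0 => if Nat.leb k (S k0) then eD dims (Wt 0) (S k0) else 0).

Lemma Tk_step k : (1 <= k < L)%nat -> Tk k = Tk (S k) + eD dims (Wt 0) k.
Proof.
  intros Hk. unfold Tk.
  replace (eD dims (Wt 0) k) with (eD dims (Wt 0) (S (k-1))) by (f_equal; lia).
  rewrite <- (sumR_delta' (L - 1) (k - 1)%nat (fun k0 => eD dims (Wt 0) (S k0))) by lia.
  rewrite <- sumR_plus. apply sumR_ext; intros k0 _.
  destruct (Nat.leb_spec k (S k0)); destruct (Nat.leb_spec (S k) (S k0)); destruct (Nat.eqb_spec k0 (k-1)%nat);
    try lia; try ring.
Qed.

Lemma Tk_le k : Tk k <= sumR (L - 1) (fun k0 => eD dims (Wt 0) (S k0)).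
Proof. apply sumR_le. intros. destruct (Nat.leb k (S i)). lra. apply spec_nonneg. Qed.

Lemma Tk_L : Tk L = 0.
Proof. unfold Tk. rewrite (sumR_ext _ _ (fun _ => 0)). apply sumR_zero. intros i Hi.
  destruct (Nat.leb_spec L (S i)); [lia|auto]. Qed.

Lemma sp_L t : sp dims (Wt t) L ^ 2 = fr2 dims (Wt t) L.
Proof. unfold sp, fr2. rewrite HL. apply spec_row. Qed.

Lemma chain_T t : 0 <= t -> forall k, (1 <= k <= L)%nat ->
  sp dims (Wt t) L ^ 2 <= sp dims (Wt t) k ^ 2 + Tk k.
Proof.
  intros Ht. assert (forall d k, (k + d = L)%nat -> (1 <= k)%nat ->
    sp dims (Wt t) L ^ 2 <= sp dims (Wt t) k ^ 2 + Tk k).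
  { induction d; intros k Hk H1.
    - replace k with L by lia. rewrite Tk_L. lra.
    - pose proof (IHd (S k) ltac:(lia) ltac:(lia)). pose proof (spec_chain t k Ht ltac:(lia)).
      rewrite (Tk_step k) by lia. lra. }
  intros k Hk. apply (H (L - k)%nat); lia.
Qed.

Lemma part_i t : 0 <= t -> forall k, (1 <= k <= L)%nat ->
  fr2 dims (Wt t) k - sp dims (Wt t) k ^ 2 <= D_init dims L (Wt 0).
Proof.
  intros Ht k Hk. rewrite D_eq.
  pose proof (chain_T t Ht k Hk). pose proof (Tk_le k). rewrite sp_L in H.
  pose proof (frob_tele t Ht k Hk). pose proof (maxR1_ge L (fr2 dims (Wt 0)) k Hk). lra.
Qed.

Lemma D_nonneg : (1 <= L)%nat -> 0 <= D_init dims L (Wt 0).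
Proof.
  intros HL1. pose proof (part_i 0 ltac:(lra) L ltac:(lia)). pose proof (sp_L 0). lra.
Qed.

End Flow.


Lemma matvec_plus m n A x y i :
  matvec m n A (fun j => x j + y j) i = matvec m n A x i + matvec m n A y i.
Proof. unfold matvec. rewrite <- sumR_plus. apply sumR_ext; intros; ring. Qed.

Lemma nsq_plus n x y : nsq n (fun i => x i + y i) = nsq n x + 2 * dot n x y + nsq n y.
Proof. unfold nsq, dot. rewrite <- sumR_scal, <- !sumR_plus. apply sumR_ext; intros; ring. Qed.

Lemma dot_scal_l n c x y : dot n (fun i => c * x i) y = c * dot n x y.
Proof. unfold dot. rewrite <- sumR_scal. apply sumR_ext; intros; ring. Qed.

Lemma nsq_of_vnorm n x : vnorm n x = 1 -> nsq n x = 1.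
Proof. intros H. rewrite <- vnorm_sq, H. ring. Qed.

Lemma proj_bound m n A u w :
  nsq m u = 1 -> dot m w u = 0 ->
  nsq n (matvec n m (trmx A) w) <= (frob2 m n A - nsq n (matvec n m (trmx A) u)) * nsq m w.
Proof.
  intros Hu Hw. set (y := matvec n m (trmx A) u).
  set (A' := fun i j => A i j - u i * y j).
  assert (E1 : forall j, matvec n m (trmx A') w j = matvec n m (trmx A) w j).
  { intros j. unfold A', matvec, trmx.
    rewrite (sumR_ext _ _ (fun i => A i j * w i - y j * (w i * u i))) by (intros; ring).
    rewrite sumR_minus, sumR_scal. fold (dot m w u). rewrite Hw. ring. }
  assert (E2 : frob2 m n A' = frob2 m n A - nsq n y).
  { unfold frob2, A'.
    rewrite (sumR_ext m _ (fun i => sumR n (fun j => A i j ^ 2) - 2 * sumR n (fun j => u i * A i j * y j)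
       + (u i * u i) * sumR n (fun j => y j * y j))).
    2:{ intros i _. rewrite <- sumR_scal, <- sumR_scal, <- sumR_minus, <- sumR_plus.
        apply sumR_ext; intros; ring. }
    rewrite sumR_plus, sumR_minus, sumR_scal, sumR_scalr.
    fold (dot m u u) (nsq m u). rewrite Hu.
    rewrite (sumR_swap m n (fun i j => u i * A i j * y j)).
    assert (E3 : sumR n (fun j => sumR m (fun i => u i * A i j * y j)) = nsq n y).
    { unfold nsq, dot. apply sumR_ext; intros j _. rewrite sumR_scalr. f_equal.
      unfold y, matvec, trmx. apply sumR_ext; intros; ring. }
    rewrite E3. unfold nsq, dot. ring. }
  rewrite <- (nsq_ext n (matvec n m (trmx A') w)) by auto.
  rewrite <- E2. apply frob_bound_tr.
Qed.

Section Flow2.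
Variables (dims : nat -> nat) (L n : nat) (ell ell' : R -> R) (z : nat -> nat -> R) (Wt : R -> net).
Hypothesis Hf : is_gradient_flow dims L n ell z Wt.
Hypothesis HL : dims L = 1%nat.
Hypothesis Hell : forall s, derivable_pt_lim ell s (ell' s).

Lemma part_ii t k : 0 <= t -> (1 <= k < L)%nat ->
  (exists i j, (i < dims (S k))%nat /\ (j < dims k)%nat /\ Wt t (S k) i j <> 0) ->
  forall uk vk uk1 vk1,
   top_sing_pair (dims k) (dims (k - 1)%nat) (Wt t k) uk vk ->
   top_sing_pair (dims (S k)) (dims k) (Wt t (S k)) uk1 vk1 ->
   (dot (dims k) vk1 uk) ^ 2 >=
     1 - (D_init dims L (Wt 0) + (spec (dims (S k)) (dims k) (Wt 0 (S k))) ^ 2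
            + (spec (dims k) (dims (k - 1)%nat) (Wt 0 k)) ^ 2)
         / (spec (dims (S k)) (dims k) (Wt t (S k))) ^ 2.
Proof.
  intros Ht Hk [i [j [Hi [Hj Hne]]]] uk vk uk1 vk1 [Hu [Hv [Hmv Hmtv]]] [Hu1 [Hv1 [Hnv Hntv]]].
  apply nsq_of_vnorm in Hu, Hv, Hu1, Hv1.
  set (M := Wt t k) in *. set (N := Wt t (S k)) in *.
  set (s := spec (dims k) (dims (k-1)%nat) M) in *.
  set (s1 := spec (dims (S k)) (dims k) N) in *.
  set (a0 := spec (dims (S k)) (dims k) (Wt 0 (S k)) ^ 2).
  set (b0 := spec (dims k) (dims (k-1)%nat) (Wt 0 k) ^ 2).
  set (D := D_init dims L (Wt 0)).
  set (c := dot (dims k) vk1 uk).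
  assert (Hs1 : 0 < s1) by (apply (spec_pos _ _ _ i j); auto).
  assert (F1 : nsq (dims (S k)) (matvec (dims (S k)) (dims k) N vk1) = s1 ^ 2).
  { rewrite (nsq_ext _ _ (fun i => s1 * uk1 i)) by auto. rewrite nsq_scal, Hu1. ring. }
  pose proof (quad_time dims L n ell ell' z Wt Hf HL Hell t k vk1 Ht Hk) as Q.
  fold M N in Q.
  pose proof (nsq_nonneg (dims (k-1)%nat) (matvec (dims (k-1)%nat) (dims k) (trmx (Wt 0 k)) vk1)).
  pose proof (spec_bound (dims (S k)) (dims k) (Wt 0 (S k)) vk1). rewrite Hv1 in H0. fold a0 in H0.
  set (w := fun i => vk1 i - c * uk i).
  assert (Hw0 : dot (dims k) w uk = 0).
  { unfold w, dot. rewrite (sumR_ext _ _ (fun i => vk1 i * uk i - c * (uk i * uk i))) by (intros; ring).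
    rewrite sumR_minus, sumR_scal. fold (dot (dims k) vk1 uk) (dot (dims k) uk uk) (nsq (dims k) uk). rewrite Hu. unfold c. ring. }
  assert (Hnw : nsq (dims k) w = 1 - c ^ 2).
  { unfold w. rewrite (nsq_ext _ _ (fun i => vk1 i + (- c) * uk i)) by (intros; lra).
    rewrite nsq_plus, nsq_scal, dot_sym, dot_scal_l, Hu, Hv1. rewrite (dot_sym (dims k) uk vk1). fold c. ring. }
  assert (HMtu : forall jj, (jj < dims (k-1)%nat)%nat -> matvec (dims (k-1)%nat) (dims k) (trmx M) uk jj = s * vk jj) by auto.
  assert (HyN : nsq (dims (k-1)%nat) (matvec (dims (k-1)%nat) (dims k) (trmx M) uk) = s ^ 2).
  { rewrite (nsq_ext _ _ (fun jj => s * vk jj)) by auto. rewrite nsq_scal, Hv. ring. }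
  assert (Hdec : nsq (dims (k-1)%nat) (matvec (dims (k-1)%nat) (dims k) (trmx M) vk1) =
     c^2 * s^2 + nsq (dims (k-1)%nat) (matvec (dims (k-1)%nat) (dims k) (trmx M) w)).
  { rewrite (nsq_ext _ _ (fun jj => c * (s * vk jj) + matvec (dims (k-1)%nat) (dims k) (trmx M) w jj)).
    2:{ intros jj Hjj. rewrite <- HMtu by auto. rewrite <- matvec_scal, <- matvec_plus.
        unfold matvec. apply sumR_ext; intros; unfold w; ring. }
    rewrite nsq_plus.
    assert (Ed : dot (dims (k-1)%nat) (fun jj => c * (s * vk jj)) (matvec (dims (k-1)%nat) (dims k) (trmx M) w) = 0).
    { rewrite (dot_ext _ _ (fun jj => (c * s) * vk jj) _ (matvec (dims (k-1)%nat) (dims k) (trmx M) w)) by (intros; ring || auto).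
      rewrite dot_scal_l, dot_sym, <- adjoint.
      rewrite (dot_ext _ w w _ (fun ii => s * uk ii)) by auto.
      rewrite dot_sym, dot_scal_l, dot_sym, Hw0. ring. }
    rewrite Ed. rewrite (nsq_ext _ (fun jj => c * (s * vk jj)) (fun jj => (c*s) * vk jj)) by (intros; ring).
    rewrite nsq_scal, Hv. ring. }
  pose proof (proj_bound (dims k) (dims (k-1)%nat) M uk w Hu Hw0) as PB. rewrite HyN, Hnw in PB.
  pose proof (quad_time dims L n ell ell' z Wt Hf HL Hell t k uk Ht Hk) as Q2. fold M N in Q2.
  pose proof (spec_bound (dims (S k)) (dims k) N uk). rewrite Hu in H1. fold s1 in H1.
  pose proof (spec_bound_tr (dims k) (dims (k-1)%nat) (Wt 0 k) uk). rewrite Hu in H2. fold b0 in H2.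
  pose proof (nsq_nonneg (dims (S k)) (matvec (dims (S k)) (dims k) (Wt 0 (S k)) uk)).
  assert (Hc2 : c ^ 2 <= 1) by (pose proof (CS_dot (dims k) vk1 uk); fold c in H4; rewrite Hv1, Hu in H4; lra).
  pose proof (part_i dims L n ell ell' z Wt Hf HL Hell t Ht k ltac:(lia)) as Pi.
  unfold fr2, sp in Pi. fold M s D in Pi.
  pose proof (spec_sq_le_frob2 (dims k) (dims (k-1)%nat) M). fold s in H4.
  pose proof (D_nonneg dims L n ell ell' z Wt Hf HL Hell ltac:(lia)). fold D in H5.
  assert (c ^ 2 >= 0) by (apply Rle_ge; apply pow2_ge_0).
  assert (Key : s1 ^ 2 * (1 - c ^ 2) <= D + a0 + b0).
  { set (g := frob2 (dims k) (dims (k-1)%nat) M - s^2) in *.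
    assert (s1 ^ 2 <= c^2 * s^2 + g * (1 - c^2) + a0) by nra.
    assert (s^2 <= s1^2 + b0) by nra.
    assert (g * (1 - c^2) <= D * (1 - c^2)) by nra.
    assert (c^2 * s^2 <= c^2*(s1^2+b0)) by (apply Rmult_le_compat_l; lra).
    assert (0 <= b0) by (unfold b0; apply pow2_ge_0).
    assert (c^2 * b0 <= b0) by nra.
    assert (D * (1 - c^2) <= D) by nra.
    nra. }
  set (X := D + a0 + b0) in *.
  assert (Hs2 : 0 < s1 ^ 2) by nra.
  assert (1 - c ^ 2 <= X / s1 ^ 2).
  { apply (Rmult_le_reg_l (s1 ^ 2)); auto. unfold Rdiv. rewrite <- Rmult_assoc, (Rmult_comm (s1^2) X), Rmult_assoc, Rinv_r by lra. lra. }
  lra.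
Qed.

End Flow2.


Fixpoint zv (dims : nat -> nat) (W : net) (v : nat -> R) (k : nat) : nat -> R :=
  match k with
  | O => v
  | S k' => matvec (dims (S k')) (dims k') (W (S k')) (zv dims W v k')
  end.

Lemma prodmat_zv dims W v k : forall i, (i < dims k)%nat ->
  matvec (dims k) (dims O) (prodmat dims W k) v i = zv dims W v k i.
Proof.
  induction k; intros i Hi.
  - unfold matvec. simpl. rewrite <- (sumR_delta (dims O) i v) by auto.
    apply sumR_ext; intros m _. rewrite Nat.eqb_sym. reflexivity.
  - simpl zv. unfold matvec at 1. simpl prodmat. unfold matmul.
    rewrite (sumR_ext _ _ (fun m => sumR (dims k) (fun q => W (S k) i q * prodmat dims W k q m * v m))).
    2:{ intros. rewrite sumR_scalr. reflexivity. }
    rewrite sumR_swap. unfold matvec. apply sumR_ext; intros q Hq. rewrite <- IHk by auto.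
    unfold matvec. rewrite <- sumR_scal. apply sumR_ext; intros; ring.
Qed.

Lemma dot_wprod dims L W v : dims L = 1%nat ->
  dot (dims O) (wprod dims L W) v = zv dims W v L 0%nat.
Proof. intros HL. rewrite <- prodmat_zv by lia. reflexivity. Qed.

Lemma sumR_mono_n m n f : (m <= n)%nat -> (forall i, 0 <= f i) -> sumR m f <= sumR n f.
Proof.
  intros H Hf. induction H; [lra|]. simpl. pose proof (Hf m0). lra.
Qed.

Lemma prodR1_le L f g : (forall k, (1 <= k <= L)%nat -> 0 <= f k <= g k) -> prodR1 L f <= prodR1 L g.
Proof.
  induction L; intros H; simpl; [lra|].
  assert (0 <= prodR1 L f).
  { clear IHL. induction L; simpl; [lra|]. assert (0 <= f (S L)) by (apply H; lia).
    assert (0 <= prodR1 L f) by (apply IHL; intros; apply H; lia). nra. }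
  assert (prodR1 L f <= prodR1 L g) by (apply IHL; intros; apply H; lia).
  pose proof (H (S L) ltac:(lia)). nra.
Qed.

Lemma prodR1_const L c : prodR1 L (fun _ => c) = c ^ L.
Proof. induction L; simpl; [auto|rewrite IHL; ring]. Qed.

Lemma prodR1_pos L f : (forall k, (1 <= k <= L)%nat -> 0 < f k) -> 0 < prodR1 L f.
Proof. induction L; intros H; simpl; [lra|]. apply Rmult_lt_0_compat. apply IHL; intros; apply H; lia. apply H; lia. Qed.

Lemma prodR1_sq L f : prodR1 L f ^ 2 = prodR1 L (fun k => f k ^ 2).
Proof. induction L; [simpl; ring|]. change (prodR1 (S L) f) with (prodR1 L f * f (S L)).
  change (prodR1 (S L) (fun k => f k ^ 2)) with (prodR1 L (fun k => f k ^ 2) * f (S L) ^ 2). rewrite <- IHL. ring. Qed.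

Lemma bernoulli n x : 0 <= x <= 1 -> 1 - INR n * x <= (1 - x) ^ n.
Proof.
  induction n; intros H; [simpl; lra|]. pose proof (IHn H). rewrite S_INR. simpl pow. pose proof (pos_INR n).
  assert ((1-x) * (1 - INR n * x) <= (1-x) * (1-x)^n) by (apply Rmult_le_compat_l; lra). nra.
Qed.

Lemma final_est (z P B1 B2 : R) L : 0 < P -> z^2 <= P^2 -> B1 ^ L <= z^2 -> P^2 <= B2 ^ L ->
  0 <= B1 <= B2 -> 0 < B2 -> 1 - INR L * ((B2 - B1) / B2) <= Rabs z / P <= 1.
Proof.
  intros HP Hz1 Hz2 HP2 HB HB2.
  set (V := Rabs z / P).
  assert (HV0 : 0 <= V) by (unfold V; apply Rmult_le_pos; [apply Rabs_pos| left; apply Rinv_0_lt_compat; auto]).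
  assert (HV2 : V ^ 2 = z ^ 2 / P ^ 2).
  { unfold V. unfold Rdiv. rewrite Rpow_mult_distr, <- pow_inv. f_equal.
    rewrite <- (pow2_abs z). auto. }
  assert (HV1 : V <= 1).
  { assert (V^2 <= 1). { rewrite HV2. apply (Rmult_le_reg_r (P^2)). nra. unfold Rdiv.
      rewrite Rmult_assoc, Rinv_l by nra. lra. }
    nra. }
  split; auto.
  assert (Hr : 0 <= B1 / B2 <= 1).
  { split. apply Rmult_le_pos; [lra| left; apply Rinv_0_lt_compat; auto].
    apply (Rmult_le_reg_r B2); auto. unfold Rdiv. rewrite Rmult_assoc, Rinv_l by lra. lra. }
  assert (E : (B2 - B1) / B2 = 1 - B1 / B2) by (field; lra).
  rewrite E. assert (Hb := bernoulli L (1 - B1/B2) ltac:(lra)).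
  replace (1 - (1 - B1/B2)) with (B1/B2) in Hb by ring.
  assert ((B1 / B2) ^ L <= V ^ 2).
  { rewrite HV2. unfold Rdiv. rewrite Rpow_mult_distr, <- pow_inv.
    assert (0 < B2 ^ L) by (apply pow_lt; auto).
    assert (0 < P ^ 2) by nra.
    apply Rmult_le_compat; auto. apply pow_le; lra. apply pow_le; left; apply Rinv_0_lt_compat; auto.
    rewrite !pow_inv.
    apply Rinv_le_contravar; auto. }
  nra.
Qed.


Lemma matvec_ext2 m n A x y i : (forall j, (j < n)%nat -> x j = y j) -> matvec m n A x i = matvec m n A y i.
Proof. intros H. unfold matvec. apply sumR_ext; intros. rewrite H; auto. Qed.

Lemma ratio_step Nz Nz' Y r F : 0 <= Nz -> 0 <= Nz' -> 0 <= Y -> r * Nz <= Nz' ->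
  Nz' ^ 2 <= Y * Nz -> Nz' <= F * Nz -> r * Nz' <= Y.
Proof.
  intros H1 H2 H3 H4 H5 H6.
  destruct (Rle_lt_dec r 0). nra.
  destruct (Req_dec Nz 0) as [Z|Z]. { subst. assert (Nz' = 0) by nra. subst. nra. }
  assert (0 < Nz) by lra.
  apply (Rmult_le_reg_r Nz); auto. nra.
Qed.

Section Flow3.
Variables (dims : nat -> nat) (L n : nat) (ell ell' : R -> R) (z : nat -> nat -> R) (Wt : R -> net).
Hypothesis Hf : is_gradient_flow dims L n ell z Wt.
Hypothesis HL : dims L = 1%nat.
Hypothesis Hell : forall s, derivable_pt_lim ell s (ell' s).

Definition e' k0 := eD dims (Wt 0) (S k0).

Lemma low t u v : 0 <= t -> top_sing_pair (dims 1%nat) (dims O) (Wt t 1%nat) u v ->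
  forall k, (k < L)%nat ->
  nsq (dims k) (matvec (dims k) (dims (S k)) (trmx (Wt t (S k))) (zv dims (Wt t) v (S k)))
   >= (sp dims (Wt t) 1%nat ^ 2 - sumR k e') * nsq (dims (S k)) (zv dims (Wt t) v (S k)).
Proof.
  intros Ht [Hu [Hv [Hmv Hmtv]]]. apply nsq_of_vnorm in Hu, Hv.
  set (W := Wt t). set (s1 := sp dims W 1%nat).
  induction k; intros Hk.
  - simpl sumR. rewrite Rminus_0_r.
    assert (Ez : forall i, (i < dims 1%nat)%nat -> zv dims W v 1%nat i = s1 * u i) by (intros; apply Hmv; auto).
    rewrite (nsq_ext (dims 1%nat) _ _ Ez), nsq_scal, Hu.
    rewrite (nsq_ext (dims O) _ (fun j => (s1 * s1) * v j)).
    + rewrite nsq_scal, Hv. right. ring.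
    + intros j Hj. rewrite (matvec_ext2 _ _ _ _ (fun i => s1 * u i)) by auto.
      rewrite matvec_scal. rewrite Hmtv by auto. change (spec (dims 1) (dims 0) (Wt t 1%nat)) with s1. ring.
  - specialize (IHk ltac:(lia)).
    set (zz := zv dims W v (S k)) in *.
    set (zz' := zv dims W v (S (S k))).
    assert (Ezz : zz' = matvec (dims (S (S k))) (dims (S k)) (W (S (S k))) zz) by reflexivity.
    pose proof (quad_time_bound dims L n ell ell' z Wt Hf HL Hell t (S k) zz Ht ltac:(lia)) as Q.
    replace (S k - 1)%nat with k in Q by lia. fold W in Q. rewrite <- Ezz in Q.
    apply Rabs_le_between in Q.
    assert (Hr : (s1 ^ 2 - sumR (S k) e') * nsq (dims (S k)) zz <= nsq (dims (S (S k))) zz').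
    { simpl sumR. unfold e' at 2. nra. }
    set (Y := nsq (dims (S k)) (matvec (dims (S k)) (dims (S (S k))) (trmx (W (S (S k)))) zz')).
    assert (Hcs : nsq (dims (S (S k))) zz' ^ 2 <= Y * nsq (dims (S k)) zz).
    { assert (E : nsq (dims (S (S k))) zz' = dot (dims (S k)) (matvec (dims (S k)) (dims (S (S k))) (trmx (W (S (S k)))) zz') zz).
      { rewrite <- adjoint, <- Ezz. reflexivity. }
      rewrite E. apply CS_dot. }
    pose proof (frob_bound (dims (S (S k))) (dims (S k)) (W (S (S k))) zz). rewrite <- Ezz in H.
    apply Rle_ge. apply (ratio_step _ _ _ _ _ (nsq_nonneg _ _) (nsq_nonneg _ _) (nsq_nonneg _ _) Hr Hcs H).
Qed.

Lemma e'_nonneg k0 : 0 <= e' k0.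
Proof. apply spec_nonneg. Qed.

Lemma growth t u v : 0 <= t -> top_sing_pair (dims 1%nat) (dims O) (Wt t 1%nat) u v ->
  let a := sp dims (Wt t) 1%nat ^ 2 - sumR (L - 1) e' in
  0 <= a -> forall k, (k < L)%nat -> a ^ (S k) <= nsq (dims (S k)) (zv dims (Wt t) v (S k)).
Proof.
  intros Ht Hp a Ha. pose proof Hp as [Hu [Hv [Hmv Hmtv]]]. apply nsq_of_vnorm in Hu, Hv.
  induction k; intros Hk.
  - assert (Ez : forall i, (i < dims 1%nat)%nat -> zv dims (Wt t) v 1%nat i = sp dims (Wt t) 1%nat * u i) by (intros; apply Hmv; auto).
    rewrite (nsq_ext (dims 1%nat) _ _ Ez), nsq_scal, Hu.
    pose proof (sumR_nonneg (L - 1) e' ltac:(intros; apply e'_nonneg)). unfold a in *. simpl. lra.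
  - specialize (IHk ltac:(lia)).
    pose proof (low t u v Ht Hp (S k) Hk) as Lo.
    pose proof (sumR_mono_n (S k) (L - 1) e' ltac:(lia) e'_nonneg).
    set (zz := zv dims (Wt t) v (S k)) in *.
    assert (Hq := quad_time_bound dims L n ell ell' z Wt Hf HL Hell t (S k) zz Ht ltac:(lia)).
    replace (S k - 1)%nat with k in Hq by lia. apply Rabs_le_between in Hq.
    assert (Hl0 : k = 0%nat \/ (0 < k)%nat) by lia.
    pose proof (low t u v Ht Hp k ltac:(lia)) as Lk. fold zz in Lk.
    change (zv dims (Wt t) v (S (S k))) with (matvec (dims (S (S k))) (dims (S k)) (Wt t (S (S k))) zz).
    assert (Hr : (sp dims (Wt t) 1%nat ^ 2 - sumR (S k) e') * nsq (dims (S k)) zz <=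
                 nsq (dims (S (S k))) (matvec (dims (S (S k))) (dims (S k)) (Wt t (S (S k))) zz)).
    { simpl sumR. unfold e' at 2. nra. }
    pose proof (nsq_nonneg (dims (S k)) zz).
    assert (a * nsq (dims (S k)) zz <= (sp dims (Wt t) 1%nat ^ 2 - sumR (S k) e') * nsq (dims (S k)) zz).
    { apply Rmult_le_compat_r; auto. unfold a. lra. }
    change (a ^ S (S k)) with (a * a ^ (S k)).
    assert (a * a ^ S k <= a * nsq (dims (S k)) zz) by (apply Rmult_le_compat_l; auto).
    lra.
Qed.

Lemma upper t v : forall k, nsq (dims k) (zv dims (Wt t) v k) <= prodR1 k (fr2 dims (Wt t)) * nsq (dims O) v.
Proof.
  induction k; simpl; [lra|].
  pose proof (frob_bound (dims (S k)) (dims k) (Wt t (S k)) (zv dims (Wt t) v k)).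
  assert (E : fr2 dims (Wt t) (S k) = frob2 (dims (S k)) (dims k) (Wt t (S k))).
  { unfold fr2. replace (S k - 1)%nat with k by lia. auto. }
  rewrite E. pose proof (frob2_nonneg (dims (S k)) (dims k) (Wt t (S k))).
  pose proof (nsq_nonneg (dims k) (zv dims (Wt t) v k)). nra.
Qed.

End Flow3.


Lemma prodR1_ext L f g : (forall k, (1 <= k <= L)%nat -> f k = g k) -> prodR1 L f = prodR1 L g.
Proof. induction L; intros H; simpl; auto. rewrite IHL, H; auto; try lia. intros; apply H; lia. Qed.

Lemma maxR1_nonneg L f : 0 <= maxR1 L f.
Proof. induction L; simpl; [lra|]. eapply Rle_trans; [apply IHL| apply Rmax_l]. Qed.

Section Flow4.
Variables (dims : nat -> nat) (L n : nat) (ell ell' : R -> R) (z : nat -> nat -> R) (Wt : R -> net).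
Hypothesis Hf : is_gradient_flow dims L n ell z Wt.
Hypothesis HL : dims L = 1%nat.
Hypothesis Hell : forall s, derivable_pt_lim ell s (ell' s).
Hypothesis HL2 : (2 <= L)%nat.

Lemma part_iii (u1 v1 : R -> nat -> R) :
  (forall t, 0 <= t -> top_sing_pair (dims 1%nat) (dims O) (Wt t 1%nat) (u1 t) (v1 t)) ->
  tends_to_infty (fun t => maxR1 L (fun k => frob (dims k) (dims (k - 1)%nat) (Wt t k))) ->
  tends_to (fun t => Rabs (dot (dims O)
               (fun j => wprod dims L (Wt t) j
                         / prodR1 L (fun k => frob (dims k) (dims (k - 1)%nat) (Wt t k)))
               (v1 t))) 1.
Proof.
  intros HT Hinf eps Heps.
  set (C := fun k => fr2 dims (Wt 0) k - fr2 dims (Wt 0) L).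
  set (K := maxR1 L (fun k => Rabs (C k))).
  set (D := D_init dims L (Wt 0)).
  set (E := sumR (L - 1) (e' dims Wt)).
  set (Q := K + D + E).
  assert (HK : 0 <= K) by apply maxR1_nonneg.
  assert (HD : 0 <= D) by (apply (D_nonneg dims L n ell ell' z Wt); auto; lia).
  assert (HE : 0 <= E) by (apply sumR_nonneg; intros; apply e'_nonneg).
  assert (HLpos : 0 < INR L) by (apply lt_0_INR; lia).
  assert (HQ : Q = K + D + E) by reflexivity.
  assert (HQK : 0 <= Q + K) by lra.
  set (M0 := Q + 1 + INR L * (Q + K) / eps).
  assert (HM0a : Q + 1 <= M0).
  { unfold M0. assert (0 <= INR L * (Q + K) / eps). { apply Rmult_le_pos. apply Rmult_le_pos; lra. left; apply Rinv_0_lt_compat; auto. } lra. }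
  destruct (Hinf (sqrt (M0 + K))) as [T HTT].
  exists (Rmax T 0). intros t Ht.
  assert (Ht0 : 0 <= t) by (pose proof (Rmax_r T 0); lra).
  assert (HtT : T <= t) by (pose proof (Rmax_l T 0); lra).
  specialize (HTT t HtT).
  set (F := fr2 dims (Wt t) L).
  assert (HF0 : 0 <= F) by apply frob2_nonneg.
  assert (Hfk : forall k, (1 <= k <= L)%nat -> fr2 dims (Wt t) k = F + C k).
  { intros k Hk. pose proof (frob_tele dims L n ell ell' z Wt Hf HL Hell t Ht0 k Hk). unfold C, F. lra. }
  assert (HCk : forall k, (1 <= k <= L)%nat -> Rabs (C k) <= K).
  { intros k Hk. apply (maxR1_ge L (fun k => Rabs (C k))); auto. }
  assert (HFM : M0 <= F).
  { assert (sqrt (M0 + K) <= sqrt (F + K)).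
    { eapply Rle_trans; [apply HTT|]. apply maxR1_le. apply sqrt_pos.
      intros k Hk. unfold frob. apply sqrt_le_1_alt. fold (fr2 dims (Wt t) k). rewrite Hfk by auto.
      pose proof (HCk k Hk). pose proof (Rle_abs (C k)). lra. }
    apply sqrt_le_0 in H; lra. }
  assert (Hfpos : forall k, (1 <= k <= L)%nat -> 0 < fr2 dims (Wt t) k).
  { intros k Hk. rewrite Hfk by auto. pose proof (HCk k Hk). pose proof (Rle_abs (- C k)). rewrite Rabs_Ropp in H0. lra. }
  set (P := prodR1 L (fun k => frob (dims k) (dims (k - 1)%nat) (Wt t k))).
  assert (HP : 0 < P).
  { apply prodR1_pos. intros k Hk. apply sqrt_lt_R0. apply Hfpos; auto. }
  assert (HP2 : P ^ 2 = prodR1 L (fr2 dims (Wt t))).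
  { unfold P. rewrite prodR1_sq. apply prodR1_ext. intros k Hk. unfold frob. rewrite pow2_sqrt. reflexivity.
    apply frob2_nonneg. }
  set (zz := zv dims (Wt t) (v1 t) L 0%nat).
  assert (Hval : Rabs (dot (dims O) (fun j => wprod dims L (Wt t) j / P) (v1 t)) = Rabs zz / P).
  { assert (Hd : dot (dims O) (fun j => wprod dims L (Wt t) j / P) (v1 t) = zz / P).
    { unfold zz. rewrite <- dot_wprod by auto. unfold dot, Rdiv. rewrite <- sumR_scalr.
      apply sumR_ext; intros; ring. }
    rewrite Hd. unfold Rdiv. rewrite Rabs_mult, Rabs_inv, (Rabs_right P) by lra. reflexivity. }
  change (Rabs (Rabs (dot (dims O) (fun j => wprod dims L (Wt t) j / P) (v1 t)) - 1) < eps).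
  rewrite Hval.
  destruct (HT t Ht0) as [Hu [Hv _]]. apply nsq_of_vnorm in Hv.
  assert (Hzz : zz ^ 2 = nsq (dims L) (zv dims (Wt t) (v1 t) L)).
  { unfold nsq, dot. rewrite HL. simpl. unfold zz. ring. }
  assert (Hup : zz ^ 2 <= P ^ 2).
  { rewrite Hzz, HP2. pose proof (upper dims L Wt HL t (v1 t) L). rewrite Hv in H. lra. }
  set (a := sp dims (Wt t) 1%nat ^ 2 - sumR (L - 1) (e' dims Wt)).
  assert (Ha : F - Q <= a).
  { pose proof (part_i dims L n ell ell' z Wt Hf HL Hell t Ht0 1%nat ltac:(lia)).
    rewrite Hfk in H by lia. pose proof (HCk 1%nat ltac:(lia)). pose proof (Rle_abs (- C 1%nat)).
    rewrite Rabs_Ropp in H1. unfold a, Q. fold D E in H |- *. lra. }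
  assert (HQ1 : 1 <= F - Q) by lra.
  assert (Hlow : (F - Q) ^ L <= zz ^ 2).
  { rewrite Hzz. eapply Rle_trans. apply pow_incr. split; [lra| exact Ha].
    assert (G := growth dims L n ell ell' z Wt Hf HL Hell t (u1 t) (v1 t) Ht0 (HT t Ht0) ltac:(fold a; lra) (L - 1)%nat ltac:(lia)).
    replace (S (L - 1)) with L in G by lia. exact G. }
  assert (HPup : P ^ 2 <= (F + K) ^ L).
  { rewrite HP2, <- prodR1_const. apply prodR1_le. intros k Hk. split. apply frob2_nonneg.
    rewrite Hfk by auto. pose proof (HCk k Hk). pose proof (Rle_abs (C k)). lra. }
  pose proof (final_est zz P (F - Q) (F + K) L HP Hup Hlow HPup ltac:(lra) ltac:(lra)) as [H1 H2].
  replace (F + K - (F - Q)) with (Q + K) in H1 by ring.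
  assert (INR L * ((Q + K) / (F + K)) < eps).
  { assert (0 < F + K) by lra.
    assert (INR L * (Q + K) / eps < F + K) by (unfold M0 in HFM; lra).
    apply (Rmult_lt_reg_r (F + K)); auto.
    replace (INR L * ((Q + K) / (F + K)) * (F + K)) with (INR L * (Q + K)) by (field; lra).
    apply (Rmult_lt_reg_r (/ eps)). apply Rinv_0_lt_compat; auto.
    replace (eps * (F + K) * / eps) with (F + K) by (field; lra). exact H0. }
  rewrite Rabs_left1 by lra. lra.
Qed.

End Flow4.

Theorem mainTheorem3
  (L : nat) (dims : nat -> nat) (n : nat)
  (x : nat -> nat -> R) (y : nat -> R) (ell ell' : R -> R) (Wt : R -> net) :
  (2 <= L)%nat ->
  dims L = 1%nat ->
  (forall i, (i < n)%nat -> vnorm (dims O) (x i) <= 1) ->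
  (forall i, (i < n)%nat -> y i = 1 \/ y i = -1) ->
  (forall s, derivable_pt_lim ell s (ell' s)) ->
  continuity ell' ->
  is_gradient_flow dims L n ell (fun i j => y i * x i j) Wt ->
  let D := D_init dims L (Wt 0) in
  (* (i) *)
  (forall t, 0 <= t -> forall k, (1 <= k <= L)%nat ->
     frob2 (dims k) (dims (k - 1)%nat) (Wt t k)
       - (spec (dims k) (dims (k - 1)%nat) (Wt t k)) ^ 2 <= D) /\
  (* (ii) *)
  (forall t, 0 <= t -> forall k, (1 <= k < L)%nat ->
     (exists i j, (i < dims (S k))%nat /\ (j < dims k)%nat /\ Wt t (S k) i j <> 0) ->
     forall uk vk uk1 vk1,
       top_sing_pair (dims k) (dims (k - 1)%nat) (Wt t k) uk vk ->
       top_sing_pair (dims (S k)) (dims k) (Wt t (S k)) uk1 vk1 ->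
       (dot (dims k) vk1 uk) ^ 2 >=
         1 - (D + (spec (dims (S k)) (dims k) (Wt 0 (S k))) ^ 2
                + (spec (dims k) (dims (k - 1)%nat) (Wt 0 k)) ^ 2)
             / (spec (dims (S k)) (dims k) (Wt t (S k))) ^ 2) /\
  (* (iii) *)
  (forall u1 v1 : R -> nat -> R,
     (forall t, 0 <= t -> top_sing_pair (dims 1%nat) (dims O) (Wt t 1%nat) (u1 t) (v1 t)) ->
     tends_to_infty (fun t => maxR1 L (fun k => frob (dims k) (dims (k - 1)%nat) (Wt t k))) ->
     tends_to (fun t => Rabs (dot (dims O)
                  (fun j => wprod dims L (Wt t) j
                            / prodR1 L (fun k => frob (dims k) (dims (k - 1)%nat) (Wt t k)))
                  (v1 t))) 1).
Proof.
  intros HL2 HL Hx Hy Hell Hc Hf D. split; [|split].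
  - intros t Ht k Hk. apply (part_i dims L n ell ell' _ Wt Hf HL Hell t Ht k Hk).
  - intros t Ht k Hk Hne uk vk uk1 vk1 H1 H2.
    apply (part_ii dims L n ell ell' _ Wt Hf HL Hell t k Ht Hk Hne uk vk uk1 vk1 H1 H2).
  - intros u1 v1 HT Hinf. apply (part_iii dims L n ell ell' _ Wt Hf HL Hell HL2 u1 v1 HT Hinf).
Qed.
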